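(* Let $M=((W,\preccurlyeq),V)$ be an intuitionistic model, $T\subseteq\mathbb{P}$ and $w\in W$ such that (1) $\{v\in W\mid w\preccurlyeq v\}$ has a unique maximal world $u$, and (2) $V(v)=T$ for all $v\in W$ with $w\preccurlyeq v$ and $v\ne w$. Then there exist an HT model $M'=((\{0,1\},\preccurlyeq'),V')$ and a bisimulation $Z\subseteq W\times\{0,1\}$ with $w\,Z\,0$.
   Context: Propositional intuitionistic Kripke semantics over a countable atom set $\mathbb{P}$: an intuitionistic model is $((W,\preccurlyeq),V)$ with $W\ne\emptyset$, $\preccurlyeq$ a partial order and $V:W\to2^{\mathbb{P}}$ monotone along $\preccurlyeq$. A world is maximal if no distinct world lies $\preccurlyeq$-above it. An HT model is an intuitionistic model on the frame $(\{0,1\},\preccurlyeq')$ with $\preccurlyeq'=\{(0,0),(1,1),(0,1)\}$. A bisimulation between $M_1=((W_1,\preccurlyeq_1),V_1)$ and $M_2=((W_2,\preccurlyeq_2),V_2)$ is a relation $Z\subseteq W_1\times W_2$ such that whenever $w_1Zw_2$: (C1) $V_1(w_1)=V_2(w_2)$; (C2) for every $v_1\succcurlyeq_1 w_1$ there is $v_2\succcurlyeq_2w_2$ with $v_1Zv_2$; (C3) for every $v_2\succcurlyeq_2w_2$ there is $v_1\succcurlyeq_1w_1$ with $v_1Zv_2$. *)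

(* Defs.v *)
From mathcomp Require Import all_boot.
Set Implicit Arguments.
Unset Strict Implicit.
Unset Printing Implicit Defensive.

Definition is_partial_order (W : Type) (le : W -> W -> Prop) : Prop :=
  (forall w, le w w) /\
  (forall u v w, le u v -> le v w -> le u w) /\
  (forall u v, le u v -> le v u -> u = v).

Definition is_imodel (P W : Type) (le : W -> W -> Prop) (V : W -> P -> Prop) : Prop :=
  inhabited W /\ is_partial_order le /\
  (forall w v, le w v -> forall p, V w p -> V v p).

Definition maximal (W : Type) (le : W -> W -> Prop) (u : W) : Prop :=
  forall v, le u v -> v = u.

(* HT frame ({0,1}, <=') with 0 := false, 1 := true; <=' = {(0,0),(1,1),(0,1)}. *)
Definition leHT (a b : bool) : Prop :=
  (a = false /\ b = false) \/ (a = true /\ b = true) \/ (a = false /\ b = true).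

Definition bisimulation (P W1 W2 : Type)
  (le1 : W1 -> W1 -> Prop) (V1 : W1 -> P -> Prop)
  (le2 : W2 -> W2 -> Prop) (V2 : W2 -> P -> Prop)
  (Z : W1 -> W2 -> Prop) : Prop :=
  forall w1 w2, Z w1 w2 ->
    V1 w1 = V2 w2 /\
    (forall v1, le1 w1 v1 -> exists v2, le2 w2 v2 /\ Z v1 v2) /\
    (forall v2, le2 w2 v2 -> exists v1, le1 w1 v1 /\ Z v1 v2).

(* Main.v *)
Require Import Defs.
From mathcomp Require Import all_boot.
From Stdlib Require Import Classical.

Theorem lemma2p7 (P : countType) (W : Type) (le : W -> W -> Prop)
  (V : W -> P -> Prop) (T : P -> Prop) (w : W) :
  is_imodel le V ->
  (exists u, le w u /\ maximal le u /\
     (forall u', le w u' -> maximal le u' -> u' = u)) ->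
  (forall v, le w v -> v <> w -> V v = T) ->
  exists V' : bool -> P -> Prop, is_imodel leHT V' /\
  exists Z : W -> bool -> Prop, bisimulation le V leHT V' Z /\ Z w false.
Proof.
  move=> [_ [[Hrefl [Htr Hanti]] Hmon]] [u [Hwu [Hmax _]]] HT.
  have HT' : forall v, le w v -> v <> w -> V v = T := HT.
  destruct (classic (u = w)) as [Euw | Nuw].
  - subst u.
    exists (fun _ => V w). split.
    + split; [exact (inhabits true)|]. split.
      * split; [case; unfold leHT; tauto|]. split.
        -- unfold leHT => a b c; case: a; case: b; case: c; intuition congruence.
        -- unfold leHT => a b; case: a; case: b; intuition congruence.
      * by [].
    + exists (fun v (b : bool) => v = w). split; last by [].
      move=> w1 w2 -> ; split; first by [].
      split.
      * move=> v1 H1. exists w2. split; first by case: w2; unfold leHT; tauto.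
        exact (Hmax _ H1).
      * move=> v2 _. exists w. by split.
  - exists (fun b => if b then T else V w). split.
    + split; [exact (inhabits true)|]. split.
      * split; [case; unfold leHT; tauto|]. split.
        -- unfold leHT => a b c; case: a; case: b; case: c; intuition congruence.
        -- unfold leHT => a b; case: a; case: b; intuition congruence.
      * move=> a b; unfold leHT; case: a; case: b; try (intuition congruence).
        move=> _ p Hp. rewrite -(HT u Hwu Nuw). exact: Hmon Hwu p Hp.
    + exists (fun v (b : bool) => (v = w /\ b = false) \/ (le w v /\ v <> w /\ b = true)).
      split; last by left.
      move=> w1 w2 [[-> ->] | [Hw1 [Nw1 ->]]].
      * split; first by [].
        split.
        -- move=> v1 H1. destruct (classic (v1 = w)) as [E|N].
           ++ exists false. split; [unfold leHT; tauto | left; by split].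
           ++ exists true. split; [unfold leHT; tauto | right; by split].
        -- move=> v2; case: v2 => _.
           ++ exists u. split; first by []. right; by split.
           ++ exists w. split; first exact: Hrefl. left; by split.
      * split; first exact: HT.
        split.
        -- move=> v1 H1. exists true. split; [unfold leHT; tauto|]. right.
           split; first exact: Htr Hw1 H1. split; last by [].
           move=> E; subst v1. apply: Nw1. exact: Hanti.
        -- move=> v2; unfold leHT => H. have -> : v2 = true by intuition congruence.
           exists w1. split; first exact: Hrefl. right; by split.
Qed.
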